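(* Let $\bar{\mathcal S}=\{f:\exists\,h,z\text{ with }((f,h),z)\in\mathcal S\}$ and $\bar{\mathcal Q}=\{f:\exists\,w\text{ with }(f,w)\in\mathcal Q\}$. Then $\bar{\mathcal S}=\bar{\mathcal Q}$; consequently, minimizing any linear function $\Lambda f^T$ over $\mathcal S$ is equivalent to minimizing it over $\mathcal Q$.
   Context: Let $R$ be a finite ring with $q$ elements, $R^-=R\setminus\{0\}$, $\mathcal H$ an $m\times n$ matrix over $R$, $\mathcal I=\{1,\dots,n\}$, $\mathcal J=\{1,\dots,m\}$. For any $r\times N$ matrix $\mathcal A$ over $R$ with rows indexed by $\rho$, let $\mathcal C_\rho(\mathcal A)=\{g\in R^{\mathrm{supp}(\mathcal A_\rho)}:\sum_ig_i\mathcal A_{\rho,i}=0\}$ and let $\mathcal Q(\mathcal A)$ be the set of $(F,W)$, $F=(F_i^{(\alpha)})_{i\le N,\alpha\in R^-}$ real, $W=(W_{\rho,g})_{\rho,g\in\mathcal C_\rho(\mathcal A)}$ real, with $W_{\rho,g}\ge0$, $\sum_gW_{\rho,g}=1$ for each $\rho$, and $F_i^{(\alpha)}=\sum_{g\in\mathcal C_\rho(\mathcal A),g_i=\alpha}W_{\rho,g}$ for all $\rho$, $i\in\mathrm{supp}(\mathcal A_\rho)$, $\alpha\in R^-$. Let $\mathcal Q=\mathcal Q(\mathcal H)$, with points written $(f,w)$, $f\in\mathbb R^{(q-1)n}$. For each $j\in\mathcal J$ let $\mathcal I_j=\{i:\mathcal H_{j,i}\ne0\}=\{i_1,\dots,i_{d_j}\}$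 in a fixed order, with $d_j\ge4$, and introduce new variables $\chi^j_1,\dots,\chi^j_{d_j-3}$. Let $\mathcal F$ be the $\big(\sum_j(d_j-2)\big)\times\big(n+\sum_j(d_j-3)\big)$ matrix over $R$, acting on vectors $(c\mid\chi)$ with $c\in R^n$ and $\chi=(\chi^j)_{j\in\mathcal J}$, whose rows express, for every $j\in\mathcal J$, the equations $c_{i_1}\mathcal H_{j,i_1}+c_{i_2}\mathcal H_{j,i_2}+\chi^j_1=0$; $-\chi^j_\ell+c_{i_{\ell+2}}\mathcal H_{j,i_{\ell+2}}+\chi^j_{\ell+1}=0$ for $\ell=1,\dots,d_j-4$; $-\chi^j_{d_j-3}+c_{i_{d_j-1}}\mathcal H_{j,i_{d_j-1}}+c_{i_{d_j}}\mathcal H_{j,i_{d_j}}=0$. Let $\mathcal S=\mathcal Q(\mathcal F)$, with points written $((f,h),z)$ where $f\in\mathbb R^{(q-1)n}$ collects the $F$-coordinates for the $c$-positions and $h$ those for the $\chi$-positions. *)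

(* Defs.v *)
From HB Require Import structures.
From mathcomp Require Import all_boot all_order all_algebra.
From mathcomp Require Import reals.
Set Implicit Arguments. Unset Strict Implicit. Unset Printing Implicit Defensive.
Import Order.TTheory GRing.Theory Num.Theory.
Local Open Scope ring_scope.

Definition Rm (R : finNzRingType) := {x : R | x != 0}.

Section Polytope.
Variables (R : finNzRingType) (K : realType).
Variables (rT cT : finType) (A : rT -> cT -> R).

(* C_rho(A): g in R^{supp(A_rho)}, encoded as a function on all columns that
   vanishes outside supp(A_rho), with sum_i g_i A_{rho,i} = 0. *)
Definition Cset (rho : rT) (g : {ffun cT -> R}) : bool :=
  [forall i, (A rho i == 0) ==> (g i == 0)] && (\sum_i g i * A rho i == 0).

(* (F, W) in Q(A).  W is only meaningful on C_rho(A); it is set to 0 elsewhere. *)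
Definition inQ (F : cT -> Rm R -> K) (W : rT -> {ffun cT -> R} -> K) : Prop :=
  [/\ (forall rho g, ~~ Cset rho g -> W rho g = 0),
      (forall rho g, Cset rho g -> 0 <= W rho g),
      (forall rho, \sum_(g | Cset rho g) W rho g = 1) &
      (forall rho i (a : Rm R), A rho i != 0 ->
          F i a = \sum_(g | Cset rho g && (g i == val a)) W rho g)].
End Polytope.

Section Splitting.
Variables (R : finNzRingType) (m n : nat) (H : 'M[R]_(m, n)).
(* s j = [:: i_1; ...; i_{d_j}] is the fixed ordering of I_j *)
Variable (s : 'I_m -> seq 'I_n).

Definition dj (j : 'I_m) : nat := size (s j).

(* rows of calF: for each j, d_j - 2 equations (0-based index l) *)
Definition FrowT := {j : 'I_m & 'I_(dj j - 2)}.
(* columns of calF: the c-positions 'I_n and the chi^j_k (0-based k < d_j - 3) *)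
Definition FcolT := ('I_n + {j : 'I_m & 'I_(dj j - 3)})%type.

(* 0-based equation index in which the c at 0-based position p of I_j occurs:
   positions 0,1 -> equation 0; position p (2 <= p <= d-3) -> equation p-1;
   positions d-2, d-1 -> equation d-3. *)
Definition eq_of_pos (d p : nat) : nat :=
  if (p <= 1)%N then 0%N else if (d - 2 <= p)%N then (d - 3)%N else p.-1.

Definition calF (r : FrowT) (c : FcolT) : R :=
  let: existT j l := r in
  match c with
  | inl i => if (i \in s j) && (eq_of_pos (dj j) (index i (s j)) == l)
             then H j i else 0
  | inr (existT j' k) =>
      if j' == j then
        (if (k : nat) == (l : nat) then 1
         else if (k.+1 == l)%N then -1 else 0)
      else 0
  end.
End Splitting.

(* Main.v *)
Require Import Defs.
From HB Require Import structures.
From mathcomp Require Import all_boot all_order all_algebra.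
From mathcomp Require Import reals zify ring.
Import Order.TTheory GRing.Theory Num.Theory.
Local Open Scope ring_scope.
Set Implicit Arguments. Unset Strict Implicit. Unset Printing Implicit Defensive.

Lemma sum_ord_eq (V : nmodType) N (o0 : 'I_N) (l : nat) (F : 'I_N -> V) :
  \sum_(k : 'I_N) (if val k == l then F k else 0) =
  if (l < N)%N then F (insubd o0 l) else 0.
Proof.
case: ifP => lN.
  rewrite (bigD1 (Ordinal lN)) //= eqxx big1 ?addr0.
    by congr F; apply: val_inj; rewrite /= val_insubd lN.
  by move=> k kne; case: eqP => // ke; case/eqP: kne; apply: val_inj.
rewrite big1 // => k _; case: eqP => // ke; move: (ltn_ord k); rewrite ke lN.
done.
Qed.

Section Proof6.
Variables (R : finNzRingType) (K : realType) (m n : nat) (H : 'M[R]_(m, n)) (s : 'I_m -> seq 'I_n).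
Hypothesis s_uniq : forall j, uniq (s j).
Hypothesis s_supp : forall j i, (i \in s j) = (H j i != 0).
Hypothesis d_ge4 : forall j, (4 <= size (s j))%N.

Local Notation d j := (dj s j).
Lemma d2_gt0 j : (0 < d j - 2)%N. Proof. have := d_ge4 j; rewrite /dj; lia. Qed.
Lemma d3_gt0 j : (0 < d j - 3)%N. Proof. have := d_ge4 j; rewrite /dj; lia. Qed.
Definition rw j (l : nat) : FrowT s := existT _ j (insubd (Ordinal (d2_gt0 j)) l).
Definition ch j (k : nat) : FcolT s := inr (existT _ j (insubd (Ordinal (d3_gt0 j)) k)).
Definition idx j i := index i (s j).
Definition rowof j i := eq_of_pos (d j) (idx j i).

Lemma calF_inl j l i : (l < d j - 2)%N ->
  calF H (rw j l) (inl i) = if (i \in s j) && (rowof j i == l) then H j i else 0.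
Proof. by move=> lt; rewrite /calF /= val_insubd lt. Qed.

Lemma calF_inr j l j' (k : 'I_(d j' - 3)) : (l < d j - 2)%N ->
  calF H (rw j l) (inr (existT _ j' k)) =
  if j' == j then (if val k == l then 1 else if (k.+1 == l)%N then -1 else 0) else 0.
Proof. by move=> lt; rewrite /calF /= val_insubd lt. Qed.

Lemma sum_sigT (F : forall j', 'I_(d j' - 3) -> R) :
  \sum_(p : {j' & 'I_(d j' - 3)}) F (tag p) (tagged p) = \sum_j' \sum_k F j' k.
Proof. by rewrite (sig_big_dep xpredT (fun _ _ => true)). Qed.

Lemma roweq j l (y : {ffun FcolT s -> R}) : (l < d j - 2)%N ->
  \sum_c y c * calF H (rw j l) c =
  \sum_(i | (i \in s j) && (rowof j i == l)) y (inl i) * H j i +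
  ((if (l < d j - 3)%N then y (ch j l) else 0) -
   (if (0 < l)%N then y (ch j l.-1) else 0)).
Proof.
move=> lt; rewrite big_sumType; congr (_ + _).
  rewrite [RHS]big_mkcond; apply: eq_bigr => i _; rewrite calF_inl //.
  by case: ifP => _; rewrite ?mulr0.
rewrite (eq_bigr (fun p => (fun j' (k : 'I_(d j' - 3)) =>
   y (inr (existT _ j' k)) * calF H (rw j l) (inr (existT _ j' k))) (tag p) (tagged p))); last by case.
rewrite (sum_sigT (fun j' (k : 'I_(d j' - 3)) => y (inr (existT _ j' k)) * calF H (rw j l) (inr (existT _ j' k)))) (bigD1 j) // [X in _ + X = _]big1 ?addr0; last first.
  by move=> j' ne; apply: big1 => k _; rewrite calF_inr // (negbTE ne) mulr0.
rewrite (eq_bigr (fun k : 'I_(d j - 3) => (if val k == l then y (inr (existT _ j k)) else 0) -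
   (if val k == l.-1 then (if (0 < l)%N then y (inr (existT _ j k)) else 0) else 0))); last first.
  move=> k _; rewrite calF_inr // eqxx.
  case: (val k =P l) => [->|ne]. rewrite mulr1; case: eqP => [e|_]; last by rewrite subr0. by case: ifP => l0; [lia|rewrite subr0].
  case: (k.+1 =P l) => [<-|ne2]; first by rewrite mulrN1 eqxx /= sub0r.
  rewrite mulr0 sub0r; case: (val k =P l.-1) => [e|]; last by rewrite oppr0.
  by case: ifP => l0; [move: e ne2 l0; rewrite /=; lia | rewrite oppr0].
rewrite sumrB (sum_ord_eq (Ordinal (d3_gt0 j))) (sum_ord_eq (Ordinal (d3_gt0 j))).
congr (_ - _); case: ifP => l0; case: ifP => // l1; lia.
Qed.

Lemma ifsum I (r : seq I) (P : pred I) (F : I -> R) (b : bool) :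
  (if b then \sum_(i <- r | P i) F i else 0) = \sum_(i <- r | P i) (if b then F i else 0).
Proof. by case: b => //; rewrite big1. Qed.

Lemma sum_mkcondr I (r : seq I) (P Q : pred I) (F : I -> R) :
  \sum_(i <- r | P i && Q i) F i = \sum_(i <- r | P i) (if Q i then F i else 0).
Proof. exact: big_mkcondr. Qed.

Lemma coef_pt (dd p l : nat) (x : R) : (4 <= dd)%N -> (p < dd)%N -> (l < dd - 2)%N ->
  (if eq_of_pos dd p == l then x else 0) +
  ((if (l < dd - 3)%N then - (if (p < l.+2)%N then x else 0) else 0) -
   (if (0 < l)%N then - (if (p < l.-1.+2)%N then x else 0) else 0)) =
  (if (l == dd - 3)%N then x else 0).
Proof.
move=> d4 pd ld; rewrite /eq_of_pos.
case h1: (p <= 1)%N; [|case h2: (dd - 2 <= p)%N]; rewrite /=; repeat (case: ifP => ?); rewrite ?(addr0,add0r,subr0,sub0r,opprK,oppr0,subrr,addrN) //; try lia.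
Qed.

Definition chiv j (k : nat) (g : {ffun 'I_n -> R}) : R :=
  - \sum_(i | (i \in s j) && (idx j i < k.+2)%N) g i * H j i.

Definition ext (g : {ffun 'I_n -> R}) : {ffun FcolT s -> R} :=
  [ffun c => match c with inl i => g i | inr p => chiv (tag p) (val (tagged p)) g end].

Lemma ext_inl g i : ext g (inl i) = g i. Proof. by rewrite ffunE. Qed.
Lemma ext_ch g j k : (k < d j - 3)%N -> ext g (ch j k) = chiv j k g.
Proof. by move=> kl; rewrite ffunE /= val_insubd kl. Qed.

Lemma idx_lt j i : i \in s j -> (idx j i < d j)%N.
Proof. by rewrite /idx /dj index_mem. Qed.

Lemma eqn_ext j l g : (l < d j - 2)%N ->
  \sum_c ext g c * calF H (rw j l) c =
  if (l == d j - 3)%N then \sum_(i | i \in s j) g i * H j i else 0.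
Proof.
move=> lt; rewrite roweq //.
have -> : (if (l < d j - 3)%N then ext g (ch j l) else 0) =
   if (l < d j - 3)%N then chiv j l g else 0 by case: ifP => // ?; rewrite ext_ch.
have -> : (if (0 < l)%N then ext g (ch j l.-1) else 0) =
   if (0 < l)%N then chiv j l.-1 g else 0 by case: ifP => // ?; rewrite ext_ch //; lia.
rewrite /chiv !sum_mkcondr -!sumrN !(ifsum (index_enum _)) -sumrB -big_split /=.
apply: eq_bigr => i iS; rewrite /rowof ext_inl; apply: coef_pt; [exact: d_ge4 | exact: idx_lt | exact: lt].
Qed.

Lemma rwE j (o : 'I_(d j - 2)) : rw j (nat_of_ord o) = existT _ j o.
Proof. by rewrite /rw (_ : insubd _ _ = o) //; apply: val_inj; rewrite /= val_insubd ltn_ord. Qed.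

Lemma chE j (k : 'I_(d j - 3)) : ch j (val k) = inr (existT _ j k).
Proof. by rewrite /ch valKd. Qed.

Lemma calF_ch j l k : (l < d j - 2)%N -> (k < d j - 3)%N ->
  calF H (rw j l) (ch j k) = if k == l then 1 else if (k.+1 == l)%N then -1 else 0.
Proof. by move=> lt kt; rewrite /ch calF_inr // eqxx !val_insubd kt. Qed.

Lemma calF_inr_nz j l p : (l < d j - 2)%N -> calF H (rw j l) (inr p) != 0 ->
  exists k, [/\ (k < d j - 3)%N, inr p = ch j k & (k == l) || (k.+1 == l)%N].
Proof.
case: p => j' k' lt nz; move: nz; rewrite calF_inr //.
case: (j' =P j) => [e|_]; last by rewrite eqxx.
subst => nz; exists (val k'); split; [exact: ltn_ord | by rewrite chE | ].
move: nz; case: (val k' =P l) => [e1|ne1]; first by move=> _; apply/orP; left; apply/eqP.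
case: (k'.+1 =P l) => [e2|ne2]; first by move=> _; apply/orP; right; apply/eqP.
by rewrite eqxx.
Qed.

Local Notation CF := (@calF R m n H s).
Definition res (rho : FrowT s) (y : {ffun FcolT s -> R}) : {ffun FcolT s -> R} :=
  [ffun c => if calF H rho c == 0 then 0 else y c].
Definition rr j l g := res (rw j l) (ext g).

Lemma sum_res rho y : \sum_c res rho y c * calF H rho c = \sum_c y c * calF H rho c.
Proof. by apply: eq_bigr => c _; rewrite ffunE; case: eqP => [->|]; rewrite ?mulr0 ?mul0r. Qed.

Lemma Cset_res rho y : Cset CF rho (res rho y) = (\sum_c y c * calF H rho c == 0).
Proof.
rewrite /Cset sum_res; have -> // : [forall c, (calF H rho c == 0) ==> (res rho y c == 0)].
by apply/forallP => c; apply/implyP => /eqP e; rewrite ffunE e eqxx.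
Qed.

Lemma sumH j g : \sum_i g i * H j i = \sum_(i in s j) g i * H j i.
Proof.
rewrite [RHS]big_mkcond; apply: eq_bigr => i _; case: ifP => //.
by rewrite s_supp => /negbFE/eqP ->; rewrite mulr0.
Qed.

Lemma Cs_rr j l g : (l < d j - 2)%N -> Cset CF (rw j l) (rr j l g) =
  if (l == d j - 3)%N then \sum_i g i * H j i == 0 else true.
Proof. by move=> lt; rewrite Cset_res eqn_ext // sumH; case: ifP; rewrite ?eqxx. Qed.

Lemma CH_rr j l g : (l < d j - 2)%N -> Cset (fun j i => H j i) j g ->
  Cset CF (rw j l) (rr j l g).
Proof. by move=> lt /andP[_ /eqP S]; rewrite Cs_rr // S eqxx; case: ifP. Qed.

Lemma rr_nz j l g c : calF H (rw j l) c != 0 -> rr j l g c = ext g c.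
Proof. by move=> nz; rewrite ffunE (negbTE nz). Qed.

Lemma calF_inl_nz j l i : (l < d j - 2)%N -> calF H (rw j l) (inl i) != 0 ->
  (i \in s j) && (rowof j i == l).
Proof. by move=> lt; rewrite calF_inl //; case: ifP => //; rewrite eqxx. Qed.

Lemma calF_inl_nz2 j l i : (l < d j - 2)%N -> i \in s j -> rowof j i == l ->
  calF H (rw j l) (inl i) != 0.
Proof. by move=> lt iS ro; rewrite calF_inl // iS ro -s_supp. Qed.

Lemma rr_inl j l g i : (l < d j - 2)%N -> i \in s j -> rowof j i == l -> rr j l g (inl i) = g i.
Proof. by move=> lt iS ro; rewrite rr_nz ?ext_inl // calF_inl_nz2. Qed.

Lemma calF_ch_nz j l k : (l < d j - 2)%N -> (k < d j - 3)%N -> (k == l) || (k.+1 == l)%N ->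
  calF H (rw j l) (ch j k) != 0.
Proof.
move=> lt kd /orP[] /eqP e; rewrite calF_ch //; first by rewrite e eqxx oner_neq0.
by rewrite -e (_ : (k == k.+1) = false) ?eqxx ?oppr_eq0 ?oner_neq0 //; lia.
Qed.

Lemma rr_ch j l k g : (l < d j - 2)%N -> (k < d j - 3)%N -> (k == l) || (k.+1 == l)%N ->
  rr j l g (ch j k) = chiv j k g.
Proof. by move=> lt kd kl; rewrite rr_nz ?ext_ch // calF_ch_nz. Qed.

Definition kp j t (g : {ffun 'I_n -> R}) : {ffun 'I_n -> R} :=
  [ffun i => if (i \in s j) && (rowof j i < t)%N then g i else 0].

Lemma kpK j t1 t2 g : (t1 <= t2)%N -> kp j t1 (kp j t2 g) = kp j t1 g.
Proof.
move=> le; apply/ffunP => i; rewrite !ffunE; case: (i \in s j) => //=.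
by case: ifP => // h; rewrite (_ : (rowof j i < t2)%N = true) //; lia.
Qed.

Lemma rowof_le j i k : i \in s j -> (idx j i < k.+2)%N -> (k < d j - 3)%N ->
  (rowof j i <= k)%N.
Proof.
move=> iS lt kd; have := idx_lt iS; rewrite /rowof /eq_of_pos.
case: ifP => _ //; case: ifP => ? ?; lia.
Qed.

Lemma chiv_kp j k t g : (k < t)%N -> (k < d j - 3)%N -> chiv j k (kp j t g) = chiv j k g.
Proof.
move=> kt kd; rewrite /chiv; congr (- _); apply: eq_bigr => i /andP[iS lt].
rewrite ffunE iS /=; have ro := rowof_le iS lt kd.
by rewrite (_ : (rowof j i < t)%N = true) //; lia.
Qed.

Lemma rr_kp j l t g : (l < t)%N -> (l < d j - 2)%N -> rr j l (kp j t g) = rr j l g.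
Proof.
move=> lt ld; apply/ffunP => c.
case: (eqVneq (CF (rw j l) c) 0) => [z|nz]; first by rewrite !ffunE z eqxx.
rewrite !rr_nz //; case: c nz => [i|p] nz.
  have /andP[iS /eqP ro] := calF_inl_nz ld nz.
  by rewrite !ext_inl ffunE iS ro lt.
have [k [kd e kl]] := calF_inr_nz ld nz.
rewrite e !ext_ch // chiv_kp //; move: kl => /orP[] /eqP; lia.
Qed.

Local Notation HH := (fun j i => H j i).

Lemma part_sum (T U : finType) (P : pred T) (Q : pred U) (phi : T -> U) (F : T -> K) :
  (forall t, P t -> Q (phi t)) ->
  \sum_(u | Q u) \sum_(t | P t && (phi t == u)) F t = \sum_(t | P t) F t.
Proof. by move=> h; rewrite (partition_big phi Q). Qed.

Lemma QtoS f w : inQ HH f w ->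
  exists (h : {j : 'I_m & 'I_(d j - 3)} -> Rm R -> K) z,
    inQ CF (fun c => match c with inl i => f i | inr k => h k end) z.
Proof.
case=> w0 wpos wsum wmarg.
exists (fun (p : {j : 'I_m & 'I_(d j - 3)}) (a : Rm R) => \sum_(g | Cset HH (tag p) g && (chiv (tag p) (nat_of_ord (tagged p)) g == val a))
                     w (tag p) g).
exists (fun (rho : FrowT s) y => \sum_(g | Cset HH (tag rho) g && (rr (tag rho) (nat_of_ord (tagged rho)) g == y))
                     w (tag rho) g).
split.
- case=> j o y /=; rewrite -rwE => ny; apply: big1 => g /andP[Cg /eqP e].
  by move: ny; rewrite -e CH_rr.
- case=> j o y /= _; apply: sumr_ge0 => g /andP[Cg _]; exact: wpos.
- case=> j o /=; rewrite -rwE part_sum; first exact: wsum.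
  by move=> g Cg; rewrite CH_rr.
- case=> j o c a /= nz0; have nz : CF (rw j o) c != 0 by rewrite rwE; exact: nz0.
  clear nz0; rewrite -rwE.
  have lt := ltn_ord o.
  transitivity (\sum_(g | Cset HH j g && (rr j o g c == val a)) w j g); last first.
    rewrite -(part_sum (P := fun g => Cset HH j g && (rr j o g c == val a))
                       (Q := fun y => Cset CF (rw j o) y && (y c == val a)) (phi := rr j o)).
      apply: eq_bigr => y /andP[_ /eqP ya]; apply: eq_bigl => g.
      case: (Cset HH j g) => //=; case: (rr j o g =P y) => [->|]; by rewrite ?ya ?eqxx ?andbF.
    by move=> g /andP[Cg ->]; rewrite CH_rr.
  rewrite (eq_bigl (fun g => Cset HH j g && (ext g c == val a))); last by move=> g; rewrite (rr_nz _ nz).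
  case: c nz => [i|p] nz.
    have /andP[iS _] := calF_inl_nz lt nz.
    rewrite /= (wmarg j i a); last by rewrite -s_supp.
    by apply: eq_bigl => g; rewrite ext_inl.
  have [k [kd e kl]] := calF_inr_nz lt nz.
  case: e => ->; rewrite /= val_insubd kd; apply: eq_bigl => g; by rewrite ext_ch.
Qed.

Lemma Cs_supp rho y c : Cset CF rho y -> CF rho c = 0 -> y c = 0.
Proof. by case/andP => /forallP /(_ c) /implyP h _ /eqP /h /eqP. Qed.

Lemma Cs_sum rho y : Cset CF rho y -> \sum_c y c * CF rho c = 0.
Proof. by case/andP => _ /eqP. Qed.

Section Key.
Variables (j : 'I_m) (t : nat) (u : {ffun 'I_n -> R}).
Hypothesis td : (t < d j - 2)%N.
Hypothesis uK : u = kp j t u.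

Let uE i : u i = if (i \in s j) && (rowof j i < t)%N then u i else 0.
Proof. by rewrite {1}uK ffunE. Qed.

Definition insy (y : {ffun FcolT s -> R}) : {ffun 'I_n -> R} :=
  [ffun i => if (i \in s j) && (rowof j i == t) then y (inl i) else u i].

Let Dg g := (g == kp j t.+1 g) && (kp j t g == u).
Let cnd (y : {ffun FcolT s -> R}) := (t == 0)%N || (y (ch j t.-1) == chiv j t.-1 u).

Lemma key_a g : Dg g -> g = insy (rr j t g).
Proof.
case/andP => /eqP g1 /eqP g2; apply/ffunP => i; rewrite ffunE.
have gi : g i = kp j t.+1 g i by rewrite {1}g1.
have ui : u i = kp j t g i by rewrite -g2.
case iS: (i \in s j) => /=; last by rewrite gi ui !ffunE iS.
case: (rowof j i =P t) => ro; first by rewrite rr_inl // ro.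
rewrite gi ui !ffunE iS /= ltnS leq_eqVlt; by case: eqP.
Qed.

Lemma key_a' g : Dg g -> cnd (rr j t g).
Proof.
case/andP => _ /eqP g2; rewrite /cnd; case: (posnP t) => [->//|t0].
rewrite rr_ch //; first (rewrite -g2 chiv_kp //); try lia.
by rewrite eqxx orbT.
Qed.

Lemma key_b y : Cset CF (rw j t) y -> cnd y -> Dg (insy y) && (rr j t (insy y) == y).
Proof.
move=> Cy cy.
have D1 : insy y = kp j t.+1 (insy y).
  apply/ffunP => i; rewrite !ffunE; case iS: (i \in s j) => /=; last by rewrite uE iS.
  case: (rowof j i =P t) => ro; first by rewrite ro ltnS leqnn.
  rewrite uE iS /=; case: ifP => h; last by case: ifP.
  by rewrite ltnS (ltnW h).
have D2 : kp j t (insy y) = u.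
  apply/ffunP => i; rewrite !ffunE [RHS]uE; case iS: (i \in s j) => //=.
  case: (rowof j i =P t) => ro; first by rewrite ro ltnn.
  by case: ifP.
have Dy : Dg (insy y) by rewrite /Dg -D1 D2 !eqxx.
rewrite Dy /=.
have chm : (0 < t)%N -> chiv j t.-1 (insy y) = y (ch j t.-1).
  move=> t0; move: cy; rewrite /cnd; case: eqP => [|_ /= /eqP ->]; first lia.
  by rewrite -[in RHS]D2 chiv_kp //; lia.
have chv : forall c, CF (rw j t) c != 0 -> ext (insy y) c = y c.
  case=> [i|p] nz.
    have /andP[iS ro] := calF_inl_nz td nz; by rewrite ext_inl ffunE iS ro.
  have [k [kd -> kl]] := calF_inr_nz td nz; rewrite ext_ch //.
  case/orP: kl => /eqP kl; last by rewrite (_ : k = t.-1) ?chm //; lia.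
  subst k.
  have e1 := Cs_sum Cy; rewrite roweq // in e1.
  have e2 := eqn_ext (insy y) td; rewrite roweq // (_ : (t == d j - 3)%N = false) in e2; last by lia.
  rewrite kd in e1 e2; rewrite ext_ch // in e2.
  have ech : (if (0 < t)%N then ext (insy y) (ch j t.-1) else 0) =
             (if (0 < t)%N then y (ch j t.-1) else 0).
    by case: ifP => // t0; rewrite ext_ch ?chm //; lia.
  have esum : \sum_(i | (i \in s j) && (rowof j i == t)) ext (insy y) (inl i) * H j i =
              \sum_(i | (i \in s j) && (rowof j i == t)) y (inl i) * H j i.
    by apply: eq_bigr => i /andP[iS ro]; rewrite ext_inl ffunE iS ro.
  rewrite ech esum in e2.
  by have := etrans e2 (esym e1); move/addrI/addIr.
apply/eqP/ffunP => c; case: (eqVneq (CF (rw j t) c) 0) => [z|nz].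
  by rewrite ffunE z eqxx (Cs_supp Cy z).
by rewrite rr_nz // chv.
Qed.

Lemma key (phi : {ffun FcolT s -> R} -> K) :
  (forall y, ~~ Cset CF (rw j t) y -> phi y = 0) ->
  \sum_(g | Dg g) phi (rr j t g) =
  \sum_(y | Cset CF (rw j t) y && cnd y) phi y.
Proof.
move=> phi0.
rewrite -(part_sum (Q := xpredT) (phi := rr j t)) // [RHS]big_mkcond.
apply: eq_bigr => y _.
case Cy: (Cset CF (rw j t) y); last first.
  by apply: big1 => g /andP[_ /eqP e]; rewrite e phi0 ?Cy.
case cy: (cnd y) => /=; last first.
  by apply: big1 => g /andP[Dgg /eqP e]; move: (key_a' Dgg); rewrite e cy.
rewrite (eq_bigl (fun g => g == insy y)); first by rewrite big_pred1_eq; have /andP[_ /eqP ->] := key_b Cy cy.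
move=> g; apply/idP/idP.
  by case/andP => Dgg /eqP e; rewrite {1}(key_a Dgg) e.
by move/eqP ->; exact: key_b.
Qed.
End Key.

Lemma term_le (T : finType) (P : pred T) (G : T -> K) x :
  P x -> (forall y, P y -> 0 <= G y) -> G x <= \sum_(y | P y) G y.
Proof.
move=> Px G0; rewrite (bigD1 x) //= lerDl; apply: sumr_ge0 => y /andP[Py _]; exact: G0.
Qed.

Lemma drop_cond (T : finType) (P : pred T) (G : T -> K) :
  (forall x, ~~ P x -> G x = 0) -> \sum_(x | P x) G x = \sum_x G x.
Proof.
move=> h; rewrite big_mkcond; apply: eq_bigr => x _; case: ifP => // /negbT /h -> //.
Qed.

Lemma sum_if_eq (T : finType) (P : pred T) (G : T -> K) a :
  \sum_(x | P x) (if x == a then G x else 0) = if P a then G a else 0.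
Proof.
rewrite -big_mkcondr; case: ifP => Pa.
  rewrite (eq_bigl (pred1 a)) ?big_pred1_eq // => x /=; case: (x =P a) => [->|_]; by rewrite ?Pa ?eqxx ?andbF.
by apply: big_pred0 => x; case: (x =P a) => [->|_]; rewrite ?Pa ?andbF.
Qed.

Section StoQ.
Variables (f : 'I_n -> Rm R -> K) (h : {j : 'I_m & 'I_(d j - 3)} -> Rm R -> K)
          (z : FrowT s -> {ffun FcolT s -> R} -> K).
Hypothesis zQ : inQ CF (fun c => match c with inl i => f i | inr k => h k end) z.

Let F := fun c => match c with inl i => f i | inr k => h k end.

Lemma z0 rho y : ~~ Cset CF rho y -> z rho y = 0.
Proof. by case: zQ => a _ _ _; apply: a. Qed.
Lemma zge0 rho y : 0 <= z rho y.
Proof. case: zQ => a b _ _; case: (boolP (Cset CF rho y)) => C; [exact: b | by rewrite a]. Qed.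
Lemma zsum rho : \sum_(y | Cset CF rho y) z rho y = 1.
Proof. by case: zQ. Qed.

Definition mg rho c b := \sum_(y | Cset CF rho y && (y c == b)) z rho y.

Lemma mg_ge0 rho c b : 0 <= mg rho c b.
Proof. by apply: sumr_ge0 => y _; apply: zge0. Qed.

Lemma mg_sum rho c : \sum_b mg rho c b = 1.
Proof. by rewrite /mg (part_sum (Q := xpredT)) ?zsum. Qed.

Lemma mg_nz rho c b (b0 : b != 0) : CF rho c != 0 -> mg rho c b = F c (exist _ b b0).
Proof. by move=> nz; case: zQ => _ _ _ e; apply/esym; exact: (e _ _ (exist _ b b0) nz). Qed.

Lemma mg_eq rho1 rho2 c b : CF rho1 c != 0 -> CF rho2 c != 0 -> mg rho1 c b = mg rho2 c b.
Proof.
move=> n1 n2; case: (eqVneq b 0) => [->|b0]; last by rewrite !(mg_nz b0).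
have e rho : mg rho c 0 = 1 - \sum_(b | b != 0) mg rho c b.
  by rewrite -(mg_sum rho c) (bigD1 0) //= addrK.
rewrite !e; congr (_ - _); apply: eq_bigr => b' b0; by rewrite !(mg_nz b0).
Qed.

Definition zz j l y := z (rw j l) y.
Definition mu j k b := mg (rw j k) (ch j k) b.

Lemma mu_next j k b : (k < d j - 3)%N -> mu j k b = mg (rw j k.+1) (ch j k) b.
Proof.
move=> kd; apply: mg_eq; apply: calF_ch_nz => //; try lia; by rewrite eqxx ?orbT.
Qed.

Definition M j t g := if t is t'.+1 then mu j t' (chiv j t' g) else 1.

Fixpoint V j t g : K :=
  match t with
  | 0 => if g == 0 then 1 else 0
  | t'.+1 => if g == kp j t'.+1 g then V j t' (kp j t' g) * zz j t' (rr j t' g) / M j t' g else 0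
  end.

Lemma M_ge0 j t g : 0 <= M j t g.
Proof. by case: t => [|t] /=; [exact: ler01 | exact: mg_ge0]. Qed.

Lemma V_ge0 j t g : 0 <= V j t g.
Proof.
elim: t g => [|t IH] g /=; first by case: ifP.
case: ifP => // _; apply: mulr_ge0; last by rewrite invr_ge0 M_ge0.
by apply: mulr_ge0; [exact: IH | exact: zge0].
Qed.

Lemma kp0 j g : kp j 0 g = 0.
Proof. by apply/ffunP => i; rewrite !ffunE andbF. Qed.

Lemma V_supp0 j t g : g != kp j t g -> V j t g = 0.
Proof. by case: t => [|t] /=; rewrite ?kp0 => /negbTE ->. Qed.

Lemma M_kp j t g : (t < d j - 2)%N -> M j t (kp j t g) = M j t g.
Proof. by case: t => [|t] //= td; rewrite chiv_kp //; lia. Qed.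

Lemma Msum j t u : (t < d j - 2)%N ->
  \sum_(y | Cset CF (rw j t) y && ((t == 0)%N || (y (ch j t.-1) == chiv j t.-1 u))) zz j t y = M j t u.
Proof.
case: t => [|t] td /=; first by rewrite (eq_bigl (fun y => Cset CF (rw j 0) y)) ?zsum // => y; rewrite andbT.
by rewrite mu_next //; lia.
Qed.

Lemma V_inv j t : (t <= d j - 2)%N ->
  (\sum_g V j t g = 1) /\
  (forall l y, (l < t)%N -> \sum_(g | rr j l g == y) V j t g = zz j l y).
Proof.
elim: t => [_|t IH tle].
  split; last by move=> l y; rewrite ltn0.
  by rewrite (bigD1 (0 : {ffun 'I_n -> R})) //= eqxx big1 ?addr0 // => g /negbTE ->.
have [IHs IHm] := IH (ltnW tle).
have td : (t < d j - 2)%N by lia.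
have VM : forall u, V j t u / M j t u * M j t u = V j t u.
  move=> u; case: (eqVneq (M j t u) 0) => [M0|Mn]; last by rewrite divfK.
  rewrite M0 mulr0; apply/esym.
  destruct t as [|t'].
    by move: M0 => /eqP; rewrite /= oner_eq0.
  apply/eqP; rewrite eq_le V_ge0 andbT -M0.
  apply: (le_trans (y := zz j t' (rr j t' u))).
    rewrite -IHm //; apply: term_le; [exact: eqxx | move=> g _; exact: V_ge0].
  rewrite /M /mu /mg; apply: term_le; last by move=> y _; apply: zge0.
  rewrite rr_ch ?eqxx ?andbT //; try lia.
  by rewrite Cs_rr; [rewrite (_ : (t' == d j - 3)%N = false) //; lia | lia].
have marg : forall l y, (l < t.+1)%N -> \sum_(g | rr j l g == y) V j t.+1 g = zz j l y.
  move=> l y lt.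
  pose G g := if rr j l g == y then V j t (kp j t g) * zz j t (rr j t g) / M j t g else 0.
  have -> : \sum_(g | rr j l g == y) V j t.+1 g = \sum_g (if g == kp j t.+1 g then G g else 0).
    rewrite big_mkcond; apply: eq_bigr => g _ /=; rewrite /G; by case: (rr j l g == y); case: ifP.
  rewrite -big_mkcond (partition_big (kp j t) (fun u => u == kp j t u)) /=; last by move=> g _; rewrite kpK.
  case: (ltngtP l t) => [lt'|gt|elt]; [|lia|].
    rewrite (eq_bigr (fun u => if rr j l u == y then V j t u else 0)); last first.
      move=> u /eqP uK.
      transitivity (\sum_(g | (g == kp j t.+1 g) && (kp j t g == u))
          ((if rr j l u == y then V j t u / M j t u else 0) * zz j t (rr j t g))).
        apply: eq_bigr => g /andP[_ /eqP gu]; rewrite /G.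
        rewrite -[rr j l g](rr_kp (t := t)) //; try lia.
        rewrite -[M j t g](M_kp) // gu.
        by case: ifP => _; [rewrite mulrAC | rewrite mul0r].
      rewrite -big_distrr /= (key (j := j) (t := t) (u := u)) //; last exact: z0.
      by rewrite Msum //; case: ifP => _; [exact: VM | rewrite mul0r].
    rewrite drop_cond; last by move=> u /negbTE nu; rewrite V_supp0 ?nu //; case: ifP.
    by rewrite -big_mkcond IHm.
  subst l.
  rewrite (eq_bigr (fun u => V j t u / M j t u *
       (if Cset CF (rw j t) y && ((t == 0)%N || (y (ch j t.-1) == chiv j t.-1 u)) then zz j t y else 0))); last first.
    move=> u /eqP uK.
    transitivity (\sum_(g | (g == kp j t.+1 g) && (kp j t g == u))
        (V j t u / M j t u * (if rr j t g == y then zz j t (rr j t g) else 0))).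
      apply: eq_bigr => g /andP[_ /eqP gu]; rewrite /G.
      rewrite -[M j t g](M_kp) // gu.
      by case: ifP => _; [rewrite mulrAC | rewrite mulr0].
    rewrite -big_distrr /= (@key j t u td uK (fun y' => if y' == y then zz j t y' else 0)); last first.
      by move=> y' ny; case: ifP => // _; rewrite /zz z0.
    by rewrite sum_if_eq.
  case Cy: (Cset CF (rw j t) y) => /=; last first.
    by rewrite /zz z0 ?Cy // big1 // => u _; rewrite mulr0.
  destruct t as [|t'].
    rewrite /M /= (eq_bigr (fun i => V j 0 i * zz j 0 y)); last by move=> i _; rewrite invr1 mulr1.
    rewrite -big_distrl /= drop_cond; last by move=> u /V_supp0.
    by rewrite IHs mul1r.
  set b := y (ch j t').
  rewrite (eq_bigr (fun u => if chiv j t' u == b then zz j t'.+1 y / mu j t' b * V j t'.+1 u else 0)); last first.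
    move=> u _.
    have -> : M j t'.+1 u = mu j t' (chiv j t' u) by [].
    have -> : ((t'.+1 == 0)%N || (y (ch j t'.+1.-1) == chiv j t'.+1.-1 u)) = (b == chiv j t' u) by [].
    case: (chiv j t' u =P b) => [e|ne]; last first.
      by rewrite (_ : (b == chiv j t' u) = false) ?mulr0 //; apply/eqP => e; apply: ne.
    by rewrite e eqxx; ring.
  rewrite drop_cond; last by move=> u /V_supp0 ->; rewrite mulr0; case: ifP.
  rewrite -big_mkcond -big_distrr /=.
  have Vchi : \sum_(u | chiv j t' u == b) V j t'.+1 u = mu j t' b.
    rewrite /mu /mg.
    rewrite (eq_bigr (fun y' => \sum_(u | (chiv j t' u == b) && (rr j t' u == y')) V j t'.+1 u)); last first.
      move=> y' /andP[_ /eqP yb]; rewrite -/(zz j t' y') -IHm //; apply: eq_bigl => u.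
      case: (rr j t' u =P y') => [e|_]; last by rewrite andbF.
      rewrite andbT -e in yb *; rewrite rr_ch in yb; [by rewrite yb eqxx | lia | lia | by rewrite eqxx].
    rewrite part_sum // => u /eqP ub.
    rewrite Cs_rr; last lia.
    rewrite (_ : (t' == d j - 3)%N = false); last lia.
    rewrite /= rr_ch; [by rewrite ub eqxx | lia | lia | by rewrite eqxx].
  rewrite Vchi; case: (eqVneq (mu j t' b) 0) => [m0|mn]; last by rewrite divfK.
  rewrite m0 mulr0; apply/esym/eqP; rewrite eq_le zge0 andbT -m0 mu_next; last lia.
  rewrite /mg /zz; apply: term_le; last by move=> y' _; apply: zge0.
  by rewrite Cy eqxx.
split => //.
rewrite -(part_sum (Q := xpredT) (P := xpredT) (phi := rr j 0)) //.
rewrite -(zsum (rw j 0)) [RHS]big_mkcond; apply: eq_bigr => y _.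
rewrite (eq_bigl (fun g => rr j 0 g == y)) // marg //.
by case: ifP => C //; rewrite /zz z0 ?C.
Qed.
End StoQ.

Lemma sum_eqP (T : finType) (P Q : pred T) (G : T -> K) :
  (forall x, G x != 0 -> P x = Q x) -> \sum_(x | P x) G x = \sum_(x | Q x) G x.
Proof.
move=> h; rewrite big_mkcond [RHS]big_mkcond; apply: eq_bigr => x _.
by case: (eqVneq (G x) 0) => [->|nz]; [rewrite !if_same | rewrite h].
Qed.

Lemma rowof_lt j i : i \in s j -> (rowof j i < d j - 2)%N.
Proof.
move=> iS; have := idx_lt iS; have := d_ge4 j; rewrite /rowof /eq_of_pos /dj.
case: ifP => ? ?; [lia|]; case: ifP => ? ?; lia.
Qed.

Lemma StoQ (f : 'I_n -> Rm R -> K) (h : {j : 'I_m & 'I_(d j - 3)} -> Rm R -> K)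
  (z : FrowT s -> {ffun FcolT s -> R} -> K) : inQ CF (fun c => match c with inl i => f i | inr k => h k end) z ->
  exists w, inQ HH f w.
Proof.
move=> zQ.
have VC : forall j g, V z j (d j - 2) g != 0 -> Cset HH j g.
  move=> j g; have -> : (d j - 2 = (d j - 3).+1)%N by have := d_ge4 j; rewrite /dj; lia.
  rewrite /=; case: ifP => [/eqP gk|]; last by rewrite eqxx.
  move=> nz; have zn : zz z j (d j - 3) (rr j (d j - 3) g) != 0.
    by apply: contraNneq nz => ->; rewrite mulr0 mul0r.
  have Cr : Cset CF (rw j (d j - 3)) (rr j (d j - 3) g).
    by apply: contraNT zn => nC; rewrite /zz (z0 zQ).
  rewrite Cs_rr ?eqxx in Cr; last by have := d_ge4 j; rewrite /dj; lia.
  apply/andP; split => //; apply/forallP => i; apply/implyP => /eqP Hz.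
  rewrite gk ffunE (_ : i \in s j = false) //; by rewrite s_supp Hz eqxx.
exists (fun j g => if Cset HH j g then V z j (d j - 2) g else 0).
split.
- by move=> j g /negbTE ->.
- by move=> j g ->; apply: V_ge0 zQ _ _ _.
- move=> j; rewrite (eq_bigr (fun g => V z j (d j - 2) g)); last by move=> g ->.
  rewrite drop_cond; last by move=> g nC; apply/eqP; apply: contraNT nC; exact: VC.
  by have [] := V_inv zQ (leqnn (d j - 2)).
- move=> j i [b b0] Hn.
  have iS : i \in s j by rewrite s_supp.
  have lt := rowof_lt iS.
  have := mg_nz zQ b0 (calF_inl_nz2 lt iS (eqxx _)) => /= <-.
  have [_ Vm] := V_inv zQ (leqnn (d j - 2)).
  rewrite /mg.
  rewrite (eq_bigr (fun y => \sum_(g : {ffun 'I_n -> R} | (Cset HH j g && (g i == b)) && (rr j (rowof j i) g == y)) V z j (d j - 2) g)); last first.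
    move=> y /andP[_ /eqP yb]; rewrite -/(zz z j (rowof j i) y) -Vm //; apply: sum_eqP => g /VC C.
    rewrite C /=; case: (rr j (rowof j i) g =P y) => [e|_]; last by rewrite andbF.
    by rewrite andbT -yb -e rr_inl ?eqxx.
  rewrite part_sum; last by move=> g /andP[C /eqP gb]; rewrite CH_rr //= rr_inl ?gb.
  by apply: eq_bigr => g /andP[-> _].
Qed.
End Proof6.

Theorem theorem6 (R : finNzRingType) (K : realType) (m n : nat)
  (H : 'M[R]_(m, n)) (s : 'I_m -> seq 'I_n)
  (s_uniq : forall j, uniq (s j))
  (s_supp : forall j i, (i \in s j) = (H j i != 0))
  (d_ge4 : forall j, (4 <= size (s j))%N) :
  let Qbar := fun f : 'I_n -> Rm R -> K =>
    exists w, inQ (fun j i => H j i) f w in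
  let Sbar := fun f : 'I_n -> Rm R -> K =>
    exists (h : {j : 'I_m & 'I_(dj s j - 3)} -> Rm R -> K) z,
      inQ (@calF R m n H s)
        (fun c => match c with inl i => f i | inr k => h k end) z in
  (forall f, Sbar f <-> Qbar f) /\
  (forall (Lam : 'I_n -> Rm R -> K) (t : K),
     (exists f, Sbar f /\ \sum_i \sum_a Lam i a * f i a = t) <->
     (exists f, Qbar f /\ \sum_i \sum_a Lam i a * f i a = t)).
Proof.
move=> Qbar Sbar.
have eqv : forall f, Sbar f <-> Qbar f.
  move=> f; split.
  - case=> h [z zQ]; exact: (StoQ s_supp d_ge4 zQ).
  - case=> w wQ; exact: (QtoS s_supp d_ge4 wQ).
split => // Lam t; split; case=> f [Hf e]; exists f; split => //; by apply/eqv.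
Qed.
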